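(* Let $\mathfrak{R}$ be an alternative ring with a nontrivial idempotent $e_1$ and Peirce decomposition $\mathfrak{R}=\mathfrak{R}_{11}\oplus\mathfrak{R}_{12}\oplus\mathfrak{R}_{21}\oplus\mathfrak{R}_{22}$, satisfying: (i) if $a_{11}\in\mathfrak{R}_{11}$, $a_{22}\in\mathfrak{R}_{22}$ and $[a_{11}+a_{22},\mathfrak{R}_{12}]=0$, then $a_{11}+a_{22}\in\mathcal{Z}(\mathfrak{R})$; (ii) if $a_{11}\in\mathfrak{R}_{11}$, $a_{22}\in\mathfrak{R}_{22}$ and $[a_{11}+a_{22},\mathfrak{R}_{21}]=0$, then $a_{11}+a_{22}\in\mathcal{Z}(\mathfrak{R})$. Let $\mathcal{D}$ be a multiplicative Lie-type derivation of $\mathfrak{R}$. Then for any $a_{11}\in\mathfrak{R}_{11}$, $b_{12}\in\mathfrak{R}_{12}$, $c_{21}\in\mathfrak{R}_{21}$, $d_{22}\in\mathfrak{R}_{22}$ there exists $z\in\mathcal{Z}(\mathfrak{R})$ such that $\mathcal{D}(a_{11}+b_{12}+c_{21}+d_{22})=\mathcal{D}(a_{11})+\mathcal{D}(b_{12})+\mathcal{D}(c_{21})+\mathcal{D}(d_{22})+z$.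
   Context: Rings are not assumed associative or unital. The associator is $(x,y,z)=(xy)z-x(yz)$; $\mathfrak{R}$ is alternative if $(x,x,y)=0=(y,x,x)$ for all $x,y$. $[x,y]=xy-yx$ and $\mathcal{Z}(\mathfrak{R})=\{r: [r,x]=0\ \forall x\in\mathfrak{R}\}$. Define $p_1(x)=x$, $p_n(x_1,\dots,x_n)=[p_{n-1}(x_1,\dots,x_{n-1}),x_n]$. For $n\ge2$, a (not necessarily additive) map $\mathcal{D}\colon\mathfrak{R}\to\mathfrak{R}$ is a multiplicative Lie $n$-derivation if $\mathcal{D}(p_n(x_1,\dots,x_n))=\sum_{i=1}^n p_n(x_1,\dots,\mathcal{D}(x_i),\dots,x_n)$ for all $x_i\in\mathfrak{R}$; a multiplicative Lie-type derivation is a multiplicative Lie $n$-derivation for some $n\ge2$. A nontrivial idempotent is $e_1\ne0$ with $e_1^2=e_1$ which is not a multiplicative identity. With $e_2a:=a-e_1a$, $ae_2:=a-ae_1$, set $\mathfrak{R}_{ij}=e_i\mathfrak{R}e_j$ ($i,j=1,2$), so $\mathfrak{R}=\bigoplus_{i,j}\mathfrak{R}_{ij}$. *)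

(* Defs.v *)
(* a (non-associative) ring is an abelian group (zmodType)
   together with a biadditive multiplication [mul], given explicitly. *)
From HB Require Import structures.
From mathcomp Require Import all_boot all_algebra.
Set Implicit Arguments. Unset Strict Implicit. Unset Printing Implicit Defensive.
Import GRing.Theory.
Local Open Scope ring_scope.

Section NonAssoc.
Variables (R : zmodType) (mul : R -> R -> R).

Definition biadditive : Prop :=
  (forall x y z, mul (x + y) z = mul x z + mul y z) /\
  (forall x y z, mul z (x + y) = mul z x + mul z y).

Definition assoc3 (x y z : R) : R := mul (mul x y) z - mul x (mul y z).

Definition alternative : Prop :=
  forall x y, assoc3 x x y = 0 /\ assoc3 y x x = 0.

Definition lie (x y : R) : R := mul x y - mul y x.

Definition central (r : R) : Prop := forall x, lie r x = 0.

Definition nontrivial_idempotent (e1 : R) : Prop :=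
  e1 <> 0 /\ mul e1 e1 = e1 /\ ~ (forall x, mul e1 x = x /\ mul x e1 = x).

(* e_i a and a e_j, with e_2 a := a - e_1 a, a e_2 := a - a e_1 *)
Definition lmulE (e1 : R) (i : nat) (a : R) : R :=
  if i == 1%N then mul e1 a else a - mul e1 a.
Definition rmulE (e1 : R) (j : nat) (a : R) : R :=
  if j == 1%N then mul a e1 else a - mul a e1.

Definition peirce (e1 : R) (i j : nat) (x : R) : Prop :=
  exists y, x = lmulE e1 i (rmulE e1 j y).

(* lie_poly k xs = p_{k+1}(xs 0, ..., xs k) *)
Fixpoint lie_poly (k : nat) (xs : nat -> R) : R :=
  match k with
  | 0 => xs 0%N
  | k'.+1 => lie (lie_poly k' xs) (xs k)
  end.

Definition lie_n_derivation (n : nat) (D : R -> R) : Prop :=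
  forall xs : nat -> R,
    D (lie_poly n.-1 xs) =
    \sum_(i < n) lie_poly n.-1 (fun j => if j == (i : nat) then D (xs j) else xs j).

Definition lie_type_derivation (D : R -> R) : Prop :=
  exists n, (2 <= n)%N /\ lie_n_derivation n D.

End NonAssoc.

(* Main.v *)
Require Import Defs.
From mathcomp Require Import all_boot all_algebra.
Set Implicit Arguments. Unset Strict Implicit. Unset Printing Implicit Defensive.
Import GRing.Theory.
Local Open Scope ring_scope.

Section ZNorm.
Variable R : zmodType.
Inductive zexpr := ZAtom of nat | ZZero | ZAdd of zexpr & zexpr | ZOpp of zexpr.
Fixpoint zden (env : seq R) (e : zexpr) : R :=
  match e with
  | ZAtom n => nth 0 env n
  | ZZero => 0
  | ZAdd a b => zden env a + zden env b
  | ZOpp a => - zden env a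
  end.
Fixpoint addc (c d : seq int) : seq int :=
  match c, d with
  | [::], _ => d
  | _, [::] => c
  | x :: c', y :: d' => (x + y) :: addc c' d'
  end.
Definition oppc (c : seq int) := map (fun x => - x) c.
Fixpoint atomc (n : nat) : seq int := if n is n'.+1 then 0 :: atomc n' else [:: 1].
Fixpoint znorm (e : zexpr) : seq int :=
  match e with
  | ZAtom n => atomc n
  | ZZero => [::]
  | ZAdd a b => addc (znorm a) (znorm b)
  | ZOpp a => oppc (znorm a)
  end.
Fixpoint zeval (c : seq int) (env : seq R) : R :=
  match c with
  | [::] => 0
  | x :: c' => (head 0 env) *~ x + zeval c' (behead env)
  end.
Lemma zeval_add c d env : zeval (addc c d) env = zeval c env + zeval d env.
Proof.
elim: c d env => [|x c IH] [|y d] env /=; rewrite ?add0r ?addr0 //.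
by rewrite IH mulrzDr addrACA.
Qed.
Lemma zeval_opp c env : zeval (oppc c) env = - zeval c env.
Proof. elim: c env => [|x c IH] env /=; rewrite ?oppr0 // IH mulrNz opprD //. Qed.
Lemma zeval_atom n env : zeval (atomc n) env = nth 0 env n.
Proof.
elim: n env => [|n IH] [|x env] /=.
- by rewrite mulr1z addr0.
- by rewrite mulr1z addr0.
- by rewrite mulr0z add0r IH; case: n {IH}.
- by rewrite mulr0z add0r IH.
Qed.
Lemma znorm_ok env e : zden env e = zeval (znorm e) env.
Proof.
elim: e => [n||a IHa b IHb|a IH] /=.
- by rewrite zeval_atom.
- by [].
- by rewrite zeval_add IHa IHb.
- by rewrite zeval_opp IH.
Qed.
Lemma zeval_zero c env : all (fun x => x == 0) c -> zeval c env = 0.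
Proof.
elim: c env => [|x c IH] env //= /andP[/eqP -> /IH ->].
by rewrite mulr0z addr0.
Qed.
Lemma zsound env a b :
  all (fun x => x == 0) (znorm (ZAdd a (ZOpp b))) -> zden env a = zden env b.
Proof.
move=> H; apply/eqP; rewrite -subr_eq0; apply/eqP.
have := znorm_ok env (ZAdd a (ZOpp b)) => /= ->.
exact: zeval_zero.
Qed.
End ZNorm.

Ltac zmember x l := match l with | x :: _ => idtac | _ :: ?l' => zmember x l' end.
Ltac zatoms t acc :=
  match t with
  | @GRing.zero _ => acc
  | @GRing.add _ ?a ?b => let acc' := zatoms a acc in zatoms b acc'
  | @GRing.opp _ ?a => zatoms a acc
  | _ => match acc with
         | _ => let _ := match goal with _ => zmember t acc end in acc
         | _ => constr:(t :: acc)
         end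
  end.
Ltac zindex x l := match l with | x :: _ => constr:(0%N) | _ :: ?l' => let n := zindex x l' in constr:(n.+1) end.
Ltac zreify t env :=
  match t with
  | @GRing.zero _ => constr:(ZZero)
  | @GRing.add _ ?a ?b => let ra := zreify a env in let rb := zreify b env in constr:(ZAdd ra rb)
  | @GRing.opp _ ?a => let ra := zreify a env in constr:(ZOpp ra)
  | _ => let n := zindex t env in constr:(ZAtom n)
  end.
Ltac zmod :=
  match goal with
  | |- @eq ?T ?l ?r =>
    let env0 := constr:(@nil T) in
    let env1 := zatoms l env0 in
    let env := zatoms r env1 in
    let el := zreify l env in
    let er := zreify r env in
    change (zden env el = zden env er); apply: zsound; vm_compute; reflexivity
  end.

Lemma zstepP (R : zmodType) (a b l r : R) : l = r -> a + r = b + l -> a = b.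
Proof. by move=> -> /addIr. Qed.
Lemma zstepN (R : zmodType) (a b l r : R) : l = r -> a + l = b + r -> a = b.
Proof. by move=> -> /addIr. Qed.
Ltac zs H := (apply: (zstepP H)) + (apply: (zstepN H)).


Section Basics.
Variables (R : zmodType) (mul : R -> R -> R).
Hypothesis Hb : biadditive mul.
Local Notation "x ⋆ y" := (mul x y) (at level 40, left associativity).

Lemma bmDl x y z : (x + y) ⋆ z = x ⋆ z + y ⋆ z. Proof. exact: Hb.1. Qed.
Lemma bmDr x y z : z ⋆ (x + y) = z ⋆ x + z ⋆ y. Proof. exact: Hb.2. Qed.
Lemma bm0l z : 0 ⋆ z = 0.
Proof. have h := bmDl 0 0 z; rewrite addr0 in h.
by apply: (addrI (0 ⋆ z)); rewrite -h addr0. Qed.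
Lemma bm0r z : z ⋆ 0 = 0.
Proof. have h := bmDr 0 0 z; rewrite addr0 in h.
by apply: (addrI (z ⋆ 0)); rewrite -h addr0. Qed.
Lemma bmNl x z : (- x) ⋆ z = - (x ⋆ z).
Proof. by apply/eqP; rewrite -subr_eq0 opprK -bmDl addNr bm0l. Qed.
Lemma bmNr x z : z ⋆ (- x) = - (z ⋆ x).
Proof. by apply/eqP; rewrite -subr_eq0 opprK -bmDr addNr bm0r. Qed.
Lemma bmBl x y z : (x - y) ⋆ z = x ⋆ z - y ⋆ z.
Proof. by rewrite bmDl bmNl. Qed.
Lemma bmBr x y z : z ⋆ (x - y) = z ⋆ x - z ⋆ y.
Proof. by rewrite bmDr bmNr. Qed.
End Basics.


Section Alt.
Variables (R : zmodType) (mul : R -> R -> R).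
Hypothesis Hb : biadditive mul.
Hypothesis Ha : alternative mul.
Local Notation "x ⋆ y" := (mul x y) (at level 40, left associativity).
Local Notation bmDl := (bmDl Hb). Local Notation bmDr := (bmDr Hb).

Lemma linL x y z : assoc3 mul x y z = - assoc3 mul y x z.
Proof.
have H1 := (Ha (x+y) z).1; have H2 := (Ha x z).1; have H3 := (Ha y z).1.
move: H1 H2 H3; rewrite /assoc3 !bmDl !bmDr !bmDl => H1 H2 H3.
zs H1; zs H2; zs H3; zmod.
Qed.
Lemma linR x y z : assoc3 mul z x y = - assoc3 mul z y x.
Proof.
have H1 := (Ha (x+y) z).2; have H2 := (Ha x z).2; have H3 := (Ha y z).2.
move: H1 H2 H3; rewrite /assoc3 !bmDr !bmDl !bmDr => H1 H2 H3.
zs H1; zs H2; zs H3; zmod.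
Qed.
Lemma altL x y : (x ⋆ x) ⋆ y = x ⋆ (x ⋆ y).
Proof. have := (Ha x y).1; rewrite /assoc3 => /eqP; rewrite subr_eq0 => /eqP //. Qed.
Lemma altR x y : (y ⋆ x) ⋆ x = y ⋆ (x ⋆ x).
Proof. have := (Ha x y).2; rewrite /assoc3 => /eqP; rewrite subr_eq0 => /eqP //. Qed.
Lemma flex x y : (x ⋆ y) ⋆ x = x ⋆ (y ⋆ x).
Proof. have H := linL x y x; have H2 := (Ha x y).2; move: H H2; rewrite /assoc3 => H H2.
zs H; zs H2; zmod. Qed.
Lemma eprod e x y : e ⋆ (x ⋆ y) = (e ⋆ x) ⋆ y + (x ⋆ e) ⋆ y - x ⋆ (e ⋆ y).
Proof. have H := linL e x y; move: H; rewrite /assoc3 => H; zs H; zmod. Qed.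
Lemma prode e x y : (x ⋆ y) ⋆ e = x ⋆ (y ⋆ e) + x ⋆ (e ⋆ y) - (x ⋆ e) ⋆ y.
Proof. have H := linR y e x; move: H; rewrite /assoc3 => H; zs H; zmod. Qed.
Lemma I3 e x y : (x ⋆ e) ⋆ y - x ⋆ (e ⋆ y) = (e ⋆ y) ⋆ x - e ⋆ (y ⋆ x).
Proof. have H := linL x e y; have H2 := linR x y e; move: H H2; rewrite /assoc3 => H H2.
zs H; zs H2; zmod. Qed.
Lemma I4 e x y : (x ⋆ e) ⋆ y - x ⋆ (e ⋆ y) = (y ⋆ x) ⋆ e - y ⋆ (x ⋆ e).
Proof. have H := linR e y x; have H2 := linL x y e; move: H H2; rewrite /assoc3 => H H2.
zs H; zs H2; zmod. Qed.
End Alt.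

Section Peirce.
Variables (R : zmodType) (mul : R -> R -> R) (e : R).
Hypothesis Hb : biadditive mul.
Hypothesis Ha : alternative mul.
Hypothesis He : mul e e = e.
Local Notation "x ⋆ y" := (mul x y) (at level 40, left associativity).
Local Notation bmDl := (bmDl Hb). Local Notation bmDr := (bmDr Hb).
Local Notation bmBl := (bmBl Hb). Local Notation bmBr := (bmBr Hb).
Local Notation bmNl := (bmNl Hb). Local Notation bmNr := (bmNr Hb).
Local Notation bm0l := (bm0l Hb). Local Notation bm0r := (bm0r Hb).

Definition P11 x := e ⋆ x = x /\ x ⋆ e = x.
Definition P12 x := e ⋆ x = x /\ x ⋆ e = 0.
Definition P21 x := e ⋆ x = 0 /\ x ⋆ e = x.
Definition P22 x := e ⋆ x = 0 /\ x ⋆ e = 0.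

Lemma eeL z : e ⋆ (e ⋆ z) = e ⋆ z.
Proof. by rewrite -(altL Ha) He. Qed.
Lemma eeR z : (z ⋆ e) ⋆ e = z ⋆ e.
Proof. by rewrite (altR Ha) He. Qed.
Lemma eflex z : (e ⋆ z) ⋆ e = e ⋆ (z ⋆ e).
Proof. exact: (flex Hb Ha). Qed.

Lemma pe11 x : peirce mul e 1 1 x -> P11 x.
Proof. move=> [y ->]; rewrite /lmulE /rmulE /=; split; first by rewrite eeL.
by rewrite eflex eeR. Qed.
Lemma pe12 x : peirce mul e 1 2 x -> P12 x.
Proof. move=> [y ->]; rewrite /lmulE /rmulE /=; split; first by rewrite eeL.
by rewrite eflex bmBl eeR subrr bm0r. Qed.
Lemma pe21 x : peirce mul e 2 1 x -> P21 x.
Proof. move=> [y ->]; rewrite /lmulE /rmulE /=; split; first by rewrite bmBr eeL subrr.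
by rewrite bmBl eflex !eeR. Qed.
Lemma pe22 x : peirce mul e 2 2 x -> P22 x.
Proof. move=> [y ->]; rewrite /lmulE /rmulE /=; split.
  by rewrite bmBr eeL subrr.
by rewrite bmBl eflex bmBl eeR subrr bm0r subrr. Qed.

Ltac prodP x y := split;
  [ rewrite (eprod Hb Ha e x y) | rewrite (prode Hb Ha e x y) ].

Lemma m21_11 x a : P21 x -> P11 a -> P21 (x ⋆ a).
Proof. move=> [h1 h2] [h3 h4]; prodP x a; rewrite ?h1 ?h2 ?h3 ?h4 ?bm0l ?bm0r; zmod. Qed.
Lemma m22_21 d x : P22 d -> P21 x -> P21 (d ⋆ x).
Proof. move=> [h1 h2] [h3 h4]; prodP d x; rewrite ?h1 ?h2 ?h3 ?h4 ?bm0l ?bm0r; zmod. Qed.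
Lemma m12_21 b x : P12 b -> P21 x -> P11 (b ⋆ x).
Proof. move=> [h1 h2] [h3 h4]; prodP b x; rewrite ?h1 ?h2 ?h3 ?h4 ?bm0l ?bm0r; zmod. Qed.
Lemma m21_12 x b : P21 x -> P12 b -> P22 (x ⋆ b).
Proof. move=> [h1 h2] [h3 h4]; prodP x b; rewrite ?h1 ?h2 ?h3 ?h4 ?bm0l ?bm0r; zmod. Qed.
Lemma m21_21 c x : P21 c -> P21 x -> P12 (c ⋆ x).
Proof. move=> [h1 h2] [h3 h4]; prodP c x; rewrite ?h1 ?h2 ?h3 ?h4 ?bm0l ?bm0r; zmod. Qed.
Lemma m11_12 a x : P11 a -> P12 x -> P12 (a ⋆ x).
Proof. move=> [h1 h2] [h3 h4]; prodP a x; rewrite ?h1 ?h2 ?h3 ?h4 ?bm0l ?bm0r; zmod. Qed.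
Lemma m12_22 x d : P12 x -> P22 d -> P12 (x ⋆ d).
Proof. move=> [h1 h2] [h3 h4]; prodP x d; rewrite ?h1 ?h2 ?h3 ?h4 ?bm0l ?bm0r; zmod. Qed.

Lemma m11_21 a x : P11 a -> P21 x -> a ⋆ x = 0.
Proof. move=> ha hx; have H := I3 Hb Ha e a x.
have [h _] := m21_11 hx ha.
move: H; rewrite ha.2 hx.1 h bm0l bm0r => H; zs H; zmod. Qed.
Lemma m21_22 x d : P21 x -> P22 d -> x ⋆ d = 0.
Proof. move=> hx hd; have H := I3 Hb Ha e x d.
have [h _] := m22_21 hd hx.
move: H; rewrite hx.2 hd.1 h bm0l bm0r => H; zs H; zmod. Qed.
Lemma m12_11 x a : P12 x -> P11 a -> x ⋆ a = 0.
Proof. move=> hx ha; have H := I4 Hb Ha e x a.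
have [_ h] := m11_12 ha hx.
move: H; rewrite hx.2 ha.1 h bm0l bm0r => H; zs H; zmod. Qed.
Lemma m22_12 d x : P22 d -> P12 x -> d ⋆ x = 0.
Proof. move=> hd hx; have H := I4 Hb Ha e d x.
have [_ h] := m12_22 hx hd.
move: H; rewrite hd.2 hx.1 h bm0l bm0r => H; zs H; zmod. Qed.
Lemma m11_22 a d : P11 a -> P22 d -> a ⋆ d = d ⋆ a.
Proof. move=> ha hd; have H := I3 Hb Ha e a d.
have H2 := eprod Hb Ha e d a.
move: H H2; rewrite ha.2 hd.1 ha.1 hd.2 !bm0l bm0r => H H2.
zs H; zs H2; zmod. Qed.
End Peirce.

Module C.


Definition setx (R : Type) (xs : nat -> R) (j : nat) (w : R) : nat -> R :=
  fun l => if l == j then w else xs l.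

Section LieBasics.
Variables (R : zmodType) (mul : R -> R -> R).
Hypothesis Hb : biadditive mul.
Local Notation "x ⋆ y" := (mul x y) (at level 40, left associativity).
Local Notation lie := (lie mul).
Local Notation lie_poly := (lie_poly mul).

Lemma lieDl x y z : lie (x + y) z = lie x z + lie y z.
Proof. rewrite /Defs.lie (bmDl Hb) (bmDr Hb); zmod. Qed.
Lemma lieDr x y z : lie z (x + y) = lie z x + lie z y.
Proof. rewrite /Defs.lie (bmDl Hb) (bmDr Hb); zmod. Qed.
Lemma lie0l z : lie 0 z = 0.
Proof. by rewrite /Defs.lie (bm0l Hb) (bm0r Hb) subrr. Qed.
Lemma lie0r z : lie z 0 = 0.
Proof. by rewrite /Defs.lie (bm0l Hb) (bm0r Hb) subrr. Qed.
Lemma lieNl x z : lie (- x) z = - lie x z.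
Proof. rewrite /Defs.lie (bmNl Hb) (bmNr Hb); zmod. Qed.
Lemma lieNr x z : lie z (- x) = - lie z x.
Proof. rewrite /Defs.lie (bmNl Hb) (bmNr Hb); zmod. Qed.
Lemma lie_central_l z x : central mul z -> lie z x = 0.
Proof. by move=> H; apply: H. Qed.
Lemma lie_central_r z x : central mul z -> lie x z = 0.
Proof. move=> H; have := H x; rewrite /Defs.lie => H'; zs H'; zmod. Qed.

Lemma lie_poly_ext m xs ys : (forall l, (l <= m)%N -> xs l = ys l) ->
  lie_poly m xs = lie_poly m ys.
Proof.
elim: m => [|m IH] H /=; first by apply: H.
by rewrite IH ?H // => l hl; apply: H; apply: leqW.
Qed.

Lemma lie_poly_add m xs j a b : (j <= m)%N ->
  lie_poly m (setx xs j (a + b)) = lie_poly m (setx xs j a) + lie_poly m (setx xs j b).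
Proof.
elim: m j => [|m IH] j hj /=.
  by move: hj; rewrite leqn0 => /eqP ->; rewrite /setx.
case: (ltngtP j m.+1) hj => // [hlt|->] _.
  have Hs : forall w, setx xs j w m.+1 = xs m.+1.
    by move=> w; rewrite /setx; have -> : (m.+1 == j) = false by apply/negbTE; rewrite neq_ltn hlt orbT.
  by rewrite IH // !Hs lieDl.
rewrite /setx eqxx.
have E : forall w, lie_poly m (setx xs m.+1 w) = lie_poly m xs.
  move=> w; apply: lie_poly_ext => l hl; rewrite /setx.
  by have -> : (l == m.+1) = false by apply/negbTE; rewrite neq_ltn ltnS hl.
by have := E (a + b); have := E a; have := E b; rewrite /setx => -> -> -> ; rewrite lieDr.
Qed.

Lemma lie_poly_zero m ys j : (j <= m)%N -> ys j = 0 -> lie_poly m ys = 0.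
Proof.
elim: m => [|m IH] hj hy /=; first by move: hj; rewrite leqn0 => /eqP <-.
case: (ltngtP j m.+1) hj => // [hlt|<-] _.
  by rewrite IH // lie0l.
by rewrite hy lie0r.
Qed.
End LieBasics.

Section LieD.
Variables (R : zmodType) (mul : R -> R -> R) (e : R) (D : R -> R) (k : nat).
Hypothesis Hb : biadditive mul.
Hypothesis HD : lie_n_derivation mul k.+2 D.
Local Notation "x ⋆ y" := (mul x y) (at level 40, left associativity).
Local Notation lie := (lie mul).
Local Notation lie_poly := (lie_poly mul).

Lemma HD' xs : D (lie_poly k.+1 xs) =
  \sum_(i < k.+2) lie_poly k.+1 (fun j => if j == i then D (xs j) else xs j).
Proof. exact: HD. Qed.

Lemma D0 : D 0 = 0.
Proof.
have h0 : lie_poly k.+1 (fun _ => 0) = 0 by apply: (lie_poly_zero Hb (j := 0)).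
rewrite -{1}h0 HD' big1 // => i _.
case hi: (nat_of_ord i) => [|i'].
  by apply: (lie_poly_zero Hb (j := 1)) => //=; rewrite hi.
by apply: (lie_poly_zero Hb (j := 0)) => //=; rewrite hi.
Qed.

Definition Fd a b := D (a + b) - D a - D b.

Lemma Add2 xs j a b : (j <= k.+1)%N ->
  D (lie_poly k.+1 (setx xs j (a + b))) =
  D (lie_poly k.+1 (setx xs j a)) + D (lie_poly k.+1 (setx xs j b))
  + lie_poly k.+1 (setx xs j (Fd a b)).
Proof.
move=> hj; rewrite !HD'.
set t := fun w (i : 'I_k.+2) => lie_poly k.+1
   (fun l => if l == i then D (setx xs j w l) else setx xs j w l).
have key : forall i : 'I_k.+2, t (a + b) i = t a i + t b i +
   (if (i : nat) == j then lie_poly k.+1 (setx xs j (Fd a b)) else 0).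
  move=> i; rewrite /t; case: eqP => [hij|/eqP hij].
    have E : forall w, lie_poly k.+1 (fun l => if l == i then D (setx xs j w l) else setx xs j w l)
         = lie_poly k.+1 (setx xs j (D w)).
      move=> w; apply: lie_poly_ext => l _; rewrite /setx hij; by case: eqP.
    rewrite !E.
    have -> : D (a + b) = (D a + D b) + Fd a b by rewrite /Fd; zmod.
    by rewrite !(lie_poly_add Hb) // addrA.
  set ys := fun l => if l == (i : nat) then D (xs l) else xs l.
  have E : forall w, lie_poly k.+1 (fun l => if l == i then D (setx xs j w l) else setx xs j w l)
         = lie_poly k.+1 (setx ys j w).
    move=> w; apply: lie_poly_ext => l _; rewrite /setx /ys.
    by case: (eqVneq l j) => [->|hlj] //; rewrite eq_sym (negbTE hij).
  by rewrite !E (lie_poly_add Hb) // addr0.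
have S : forall c : R, \sum_(i < k.+2) (if (i : nat) == j then c else 0) = c.
  by move=> c; rewrite -big_mkcond (big_ord1_eq _ (fun _ => c)) ltnS hj.
by rewrite (eq_bigr _ (fun i _ => key i)) !big_split S.
Qed.

Definition Q (y v : R) := iter k (fun w => lie w e) (lie y v).

Lemma bridge_gen y v j : lie_poly j.+1 (setx (setx (fun _ => e) 1 v) 0 y) =
  iter j (fun w => lie w e) (lie y v).
Proof. elim: j => [|j IH] //=; by rewrite -IH. Qed.

Lemma bridge y v : lie_poly k.+1 (setx (setx (fun _ => e) 1 v) 0 y) = Q y v.
Proof. exact: bridge_gen. Qed.

Lemma bridge' y v : lie_poly k.+1 (setx (setx (fun _ => e) 0 y) 1 v) = Q y v.
Proof.
rewrite -bridge; apply: lie_poly_ext => l _; rewrite /setx.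
by case: l => [|[|l]].
Qed.

Lemma ProbeAdd0 a b v : D (Q (a + b) v) = D (Q a v) + D (Q b v) + Q (Fd a b) v.
Proof. have := Add2 (setx (fun _ => e) 1 v) a b (leq0n _); by rewrite !bridge. Qed.

Lemma ProbeAdd1 X a b : D (Q X (a + b)) = D (Q X a) + D (Q X b) + Q X (Fd a b).
Proof. have := Add2 (setx (fun _ => e) 0 X) (j := 1) a b (isT : (1 <= k.+1)%N); by rewrite !bridge'. Qed.
End LieD.

End C.
Import C.


Section Main.
Variables (R : zmodType) (mul : R -> R -> R) (e : R) (D : R -> R) (k : nat).
Hypothesis Hb : biadditive mul.
Hypothesis Ha : alternative mul.
Hypothesis He : mul e e = e.
Hypothesis HD : lie_n_derivation mul k.+2 D.
Hypothesis Hk : (0 < k)%N.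
Hypothesis Hi : forall a11 a22, peirce mul e 1 1 a11 -> peirce mul e 2 2 a22 ->
     (forall x, peirce mul e 1 2 x -> lie mul (a11 + a22) x = 0) ->
     central mul (a11 + a22).
Hypothesis Hii : forall a11 a22, peirce mul e 1 1 a11 -> peirce mul e 2 2 a22 ->
     (forall x, peirce mul e 2 1 x -> lie mul (a11 + a22) x = 0) ->
     central mul (a11 + a22).
Local Notation "x ⋆ y" := (mul x y) (at level 40, left associativity).
Local Notation lie := (lie mul).
Local Notation Q := (Q mul e k).
Local Notation Fd := (Fd D).
Local Notation f := (fun w => lie w e).
Local Notation P11 := (P11 mul e). Local Notation P12 := (P12 mul e).
Local Notation P21 := (P21 mul e). Local Notation P22 := (P22 mul e).
Local Notation bmDl := (bmDl Hb). Local Notation bmDr := (bmDr Hb).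
Local Notation bmBl := (bmBl Hb). Local Notation bmBr := (bmBr Hb).
Local Notation bmNl := (bmNl Hb). Local Notation bmNr := (bmNr Hb).
Local Notation bm0l := (bm0l Hb). Local Notation bm0r := (bm0r Hb).

Lemma itD j x y : iter j f (x + y) = iter j f x + iter j f y.
Proof. elim: j => [|j IH] //=; by rewrite IH (lieDl Hb). Qed.
Lemma itN j x : iter j f (- x) = - iter j f x.
Proof. elim: j => [|j IH] //=; by rewrite IH (lieNl Hb). Qed.
Lemma it0 j : iter j f 0 = 0.
Proof. elim: j => [|j IH] //=; by rewrite IH (lie0l Hb). Qed.
Lemma itK x : f x = 0 -> iter k f x = 0.
Proof. by case: k Hk => // j _ H; rewrite iterSr H it0. Qed.
Lemma itK1 j x : f x = 0 -> iter j.+1 f x = 0.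
Proof. by move=> H; rewrite iterSr H it0. Qed.
Lemma f21 x : P21 x -> f x = x.
Proof. by move=> [h1 h2]; rewrite /Defs.lie h1 h2 subr0. Qed.
Lemma f12 x : P12 x -> f x = - x.
Proof. by move=> [h1 h2]; rewrite /Defs.lie h1 h2 sub0r. Qed.
Lemma f11 x : P11 x -> f x = 0.
Proof. by move=> [h1 h2]; rewrite /Defs.lie h1 h2 subrr. Qed.
Lemma f22 x : P22 x -> f x = 0.
Proof. by move=> [h1 h2]; rewrite /Defs.lie h1 h2 subrr. Qed.
Lemma it21 j x : P21 x -> iter j f x = x.
Proof. move=> h; elim: j => [|j IH] //=; by rewrite IH f21. Qed.
Lemma it12 j x : P12 x -> iter j f x = if odd j then - x else x.
Proof. move=> h; elim: j => [|j IH] //=; rewrite IH.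
case: (odd j) => /=; last by rewrite f12.
by rewrite (lieNl Hb) f12 // opprK. Qed.

Lemma P12N x : P12 x -> P12 (- x).
Proof. by move=> [h1 h2]; split; rewrite ?bmNl ?bmNr ?h1 ?h2 ?oppr0. Qed.
Lemma P21N x : P21 x -> P21 (- x).
Proof. by move=> [h1 h2]; split; rewrite ?bmNl ?bmNr ?h1 ?h2 ?oppr0. Qed.
Lemma P21D x y : P21 x -> P21 y -> P21 (x + y).
Proof. by move=> [h1 h2] [h3 h4]; split; rewrite ?bmDl ?bmDr ?h1 ?h2 ?h3 ?h4 ?addr0. Qed.
Lemma P12it j x : P12 x -> P12 (iter j f x).
Proof. by move=> h; rewrite it12 //; case: (odd j) => //; apply: P12N. Qed.
Lemma P11e : P11 e. Proof. by split. Qed.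

Lemma QDl a b v : Q (a + b) v = Q a v + Q b v.
Proof. by rewrite /C.Q (lieDl Hb) itD. Qed.
Lemma QNl a v : Q (- a) v = - Q a v.
Proof. by rewrite /C.Q (lieNl Hb) itN. Qed.
Lemma Qcl z v : central mul z -> Q z v = 0.
Proof. by move=> h; rewrite /C.Q (lie_central_l _ h) it0. Qed.
Lemma Qcr z v : central mul z -> Q v z = 0.
Proof. by move=> h; rewrite /C.Q (lie_central_r _ h) it0. Qed.

Lemma Qdef a b v : Q (Fd a b) v = D (Q a v + Q b v) - D (Q a v) - D (Q b v).
Proof. have H := ProbeAdd0 e Hb HD a b v; rewrite QDl in H; zs H; zmod. Qed.

Lemma Qdef0 a b v : (Q a v = 0 \/ Q b v = 0) -> Q (Fd a b) v = 0.
Proof. by rewrite Qdef; case=> ->; rewrite ?add0r ?addr0 (D0 Hb HD); zmod. Qed.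

Definition T11 T := e ⋆ (T ⋆ e).
Definition T12 T := e ⋆ (T - T ⋆ e).
Definition T21 T := T ⋆ e - e ⋆ (T ⋆ e).
Definition T22 T := (T - T ⋆ e) - e ⋆ (T - T ⋆ e).
Lemma T11P T : P11 (T11 T). Proof. by apply: (pe11 Hb Ha He); exists T. Qed.
Lemma T12P T : P12 (T12 T). Proof. by apply: (pe12 Hb Ha He); exists T. Qed.
Lemma T21P T : P21 (T21 T). Proof. by apply: (pe21 Hb Ha He); exists T. Qed.
Lemma T22P T : P22 (T22 T). Proof. by apply: (pe22 Hb Ha He); exists T. Qed.
Lemma Tsum T : T = T11 T + T12 T + T21 T + T22 T.
Proof. rewrite /T11 /T12 /T21 /T22; zmod. Qed.

Lemma diag_gen T a b c d : P11 a -> P12 b -> P21 c -> P22 d -> T = a + b + c + d ->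
  Q T e = 0 -> T = a + d.
Proof.
move=> ha hb hc hd ->.
rewrite /C.Q -iterSr !itD (itK1 _ (f11 ha)) (itK1 _ (f22 hd)) (it21 _ hc) (it12 _ hb) => H.
have H2 : e ⋆ (0 + (if odd k.+1 then - b else b) + c + 0) = 0 by rewrite H bm0r.
rewrite !bmDr bm0r hc.1 !addr0 add0r in H2.
have E12 : b = 0.
  by case: (odd k.+1) H2; rewrite ?bmNr hb.1 // => /eqP; rewrite oppr_eq0 => /eqP.
move: H; rewrite E12 oppr0 if_same !add0r addr0 => E21.
by rewrite E21 addr0 addr0.
Qed.

Lemma diag T : Q T e = 0 -> T = T11 T + T22 T.
Proof. exact: (diag_gen (T11P T) (T12P T) (T21P T) (T22P T) (Tsum T)). Qed.

Lemma P12D x y : P12 x -> P12 y -> P12 (x + y).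
Proof. by move=> [h1 h2] [h3 h4]; split; rewrite ?bmDl ?bmDr ?h1 ?h2 ?h3 ?h4 ?addr0. Qed.

Lemma cent12 T : Q T e = 0 -> (forall x, P12 x -> Q T x = 0) -> central mul T.
Proof.
move=> H0 Hx; have hT := diag H0; rewrite hT.
apply: Hi; [by exists T | by exists T | ].
move=> x /(pe12 Hb Ha He) hx; have := Hx x hx; rewrite {1}hT /C.Q.
have E : lie (T11 T + T22 T) x = T11 T ⋆ x - x ⋆ T22 T.
  rewrite /Defs.lie bmDl bmDr (m22_12 Hb Ha (T22P T) hx) (m12_11 Hb Ha hx (T11P T)); zmod.
have hw : P12 (T11 T ⋆ x - x ⋆ T22 T).
  by apply: P12D; [apply: (m11_12 Hb Ha (T11P T) hx) | apply: P12N; apply: (m12_22 Hb Ha hx (T22P T))].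
rewrite E (it12 _ hw); case: (odd k) => // /eqP; by rewrite oppr_eq0 => /eqP.
Qed.

Lemma cent21 T : Q T e = 0 -> (forall x, P21 x -> Q T x = 0) -> central mul T.
Proof.
move=> H0 Hx; have hT := diag H0; rewrite hT.
apply: Hii; [by exists T | by exists T | ].
move=> x /(pe21 Hb Ha He) hx; have := Hx x hx; rewrite {1}hT /C.Q.
have E : lie (T11 T + T22 T) x = T22 T ⋆ x - x ⋆ T11 T.
  rewrite /Defs.lie bmDl bmDr (m11_21 Hb Ha (T11P T) hx) (m21_22 Hb Ha hx (T22P T)); zmod.
have hw : P21 (T22 T ⋆ x - x ⋆ T11 T).
  by apply: P21D; [apply: (m22_21 Hb Ha (T22P T) hx) | apply: P21N; apply: (m21_11 Hb Ha hx (T11P T))].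
by rewrite E (it21 _ hw).
Qed.

Local Notation m11_21 := (m11_21 Hb Ha). Local Notation m21_11 := (m21_11 Hb Ha).
Local Notation m22_21 := (m22_21 Hb Ha). Local Notation m21_22 := (m21_22 Hb Ha).
Local Notation m12_21 := (m12_21 Hb Ha). Local Notation m21_12 := (m21_12 Hb Ha).
Local Notation m21_21 := (m21_21 Hb Ha). Local Notation m11_22 := (m11_22 Hb Ha).

Lemma QDr y v w : Q y (v + w) = Q y v + Q y w.
Proof. by rewrite /C.Q (lieDr Hb) itD. Qed.
Lemma Qoff y v : f (y ⋆ v) = 0 -> f (v ⋆ y) = 0 -> Q y v = 0.
Proof.
move=> /= h1 h2; rewrite /C.Q; apply: itK.
have -> : lie y v = y ⋆ v - v ⋆ y by [].
by rewrite /= (lieDl Hb) (lieNl Hb) h1 h2 subrr.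
Qed.
Lemma QP21 y v w : lie y v = w -> P21 w -> Q y v = w.
Proof. by move=> h hw; rewrite /C.Q h it21. Qed.
Lemma QP0 y v : lie y v = 0 -> Q y v = 0.
Proof. by move=> h; rewrite /C.Q h it0. Qed.
Lemma Qe11 a : P11 a -> Q a e = 0.
Proof. by move=> h; apply: QP0; apply: f11. Qed.
Lemma Qe22 a : P22 a -> Q a e = 0.
Proof. by move=> h; apply: QP0; apply: f22. Qed.
Lemma Qe21 a : P21 a -> Q a e = a.
Proof. by move=> h; apply: QP21 => //; apply: f21. Qed.
Lemma Qe12 b : P12 b -> P12 (Q b e).
Proof. by move=> h; rewrite /C.Q (f12 h); apply: P12it; apply: P12N. Qed.

Lemma L1a a c : P11 a -> P21 c -> central mul (Fd a c).
Proof.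
move=> ha hc; apply: cent12; first by apply: Qdef0; left; apply: Qe11.
move=> x hx; apply: Qdef0; right; apply: Qoff.
  by apply: f22; apply: m21_12.
by apply: f11; apply: m12_21.
Qed.
Lemma L1b c d : P21 c -> P22 d -> central mul (Fd c d).
Proof.
move=> hc hd; apply: cent12; first by apply: Qdef0; right; apply: Qe22.
move=> x hx; apply: Qdef0; left; apply: Qoff.
  by apply: f22; apply: m21_12.
by apply: f11; apply: m12_21.
Qed.
Lemma L1c a b : P11 a -> P12 b -> central mul (Fd a b).
Proof.
move=> ha hb; apply: cent21; first by apply: Qdef0; left; apply: Qe11.
move=> x hx; apply: Qdef0; right; apply: Qoff.
  by apply: f11; apply: m12_21.
by apply: f22; apply: m21_12.
Qed.

Lemma LemB X1 X2 Y1 Y2 : central mul (Fd X1 X2) -> central mul (Fd Y1 Y2) ->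
  D (Q (X1 + X2) (Y1 + Y2)) = D (Q X1 Y1) + D (Q X1 Y2) + D (Q X2 Y1) + D (Q X2 Y2).
Proof.
move=> h1 h2; rewrite (ProbeAdd0 e Hb HD) (Qcl _ h1) addr0 !(ProbeAdd1 e Hb HD) !(Qcr _ h2) !addr0.
zmod.
Qed.

Lemma L2' b c : P12 b -> P21 c -> D (Q b e + - c) = D (Q b e) + D (- c).
Proof.
move=> hb hc; have H := LemB (L1c P11e hb) (L1a P11e hc).
rewrite !QDl !QDr in H.
have E1 : Q e e = 0 by apply: QP0; rewrite /Defs.lie subrr.
have E2 : Q e c = - c.
  apply: QP21; last exact: P21N.
  by rewrite /Defs.lie hc.1 hc.2 sub0r.
have E3 : Q b c = 0.
  apply: Qoff; first by apply: f11; apply: m12_21.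
  by apply: f22; apply: m21_12.
rewrite E1 E2 E3 (D0 Hb HD) in H.
have -> : Q b e + - c = 0 + - c + (Q b e + 0) by zmod.
rewrite H; zmod.
Qed.

Lemma L2 b c : P12 b -> P21 c -> D (b + c) = D b + D c.
Proof.
move=> hb hc.
pose b0 := if odd k then b else - b.
have hb0 : P12 b0 by rewrite /b0; case: (odd k) => //; apply: P12N.
have E : Q b0 e = b.
  rewrite /C.Q (f12 hb0) itN (it12 _ hb0) /b0.
  by case: (odd k); rewrite ?opprK.
have := L2' hb0 (P21N hc); by rewrite E opprK.
Qed.

Lemma F5 a x d : P11 a -> P21 x -> P22 d -> D (- (x ⋆ a) + d ⋆ x) = D (- (x ⋆ a)) + D (d ⋆ x).
Proof.
move=> ha hx hd; have H := LemB (L1b (P21N hx) hd) (L1a ha hx).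
rewrite !QDl !QDr in H.
have E1 : Q (- x) a = - (x ⋆ a).
  apply: QP21; last by apply: P21N; apply: m21_11.
  by rewrite /Defs.lie bmNl bmNr (m11_21 ha hx) oppr0 subr0.
have E2 : Q (- x) x = 0.
  by apply: QP0; rewrite /Defs.lie bmNl bmNr opprK addrC subrr.
have E3 : Q d a = 0.
  by apply: QP0; rewrite /Defs.lie (m11_22 ha hd) subrr.
have E4 : Q d x = d ⋆ x.
  apply: QP21; last by apply: m22_21.
  by rewrite /Defs.lie (m21_22 hx hd) subr0.
rewrite E1 E2 E3 E4 (D0 Hb HD) in H.
have -> : - (x ⋆ a) + d ⋆ x = - (x ⋆ a) + 0 + (0 + d ⋆ x) by zmod.
rewrite H; zmod.
Qed.

Lemma Qdef' a b v qa qb : Q a v = qa -> Q b v = qb ->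
  Q (Fd a b) v = D (qa + qb) - D qa - D qb.
Proof. by move=> <- <-; apply: Qdef. Qed.

Lemma QT a b c d v :
  Q (D (a + b + c + d) - D a - D b - D c - D d) v =
  D (Q a v + Q b v + Q c v + Q d v) - D (Q a v) - D (Q b v) - D (Q c v) - D (Q d v).
Proof.
have -> : D (a + b + c + d) - D a - D b - D c - D d = Fd (a + b + c) d + Fd (a + b) c + Fd a b.
  by rewrite /C.Fd; zmod.
rewrite QDl QDl.
rewrite (@Qdef' (a + b + c) d v (Q a v + Q b v + Q c v) (Q d v)); last by []; last by rewrite !QDl.
rewrite (@Qdef' (a + b) c v (Q a v + Q b v) (Q c v)); last by []; last by rewrite !QDl.
rewrite (@Qdef' a b v (Q a v) (Q b v)) //.
zmod.
Qed.

Lemma mainT a b c d : P11 a -> P12 b -> P21 c -> P22 d ->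
  central mul (D (a + b + c + d) - D a - D b - D c - D d).
Proof.
move=> ha hb hc hd; apply: cent21.
  rewrite QT (Qe11 ha) (Qe22 hd) (Qe21 hc) (D0 Hb HD).
  have -> : 0 + Q b e + c + 0 = Q b e + c by zmod.
  rewrite (L2 (Qe12 hb) hc); zmod.
move=> x hx; rewrite QT.
have E1 : Q a x = - (x ⋆ a).
  apply: QP21; last by apply: P21N; apply: m21_11.
  by rewrite /Defs.lie (m11_21 ha hx) sub0r.
have E2 : Q b x = 0.
  apply: Qoff; first by apply: f11; apply: m12_21.
  by apply: f22; apply: m21_12.
have hc' : P12 (Q c x).
  by apply: P12it; apply: P12D; [apply: m21_21 | apply: P12N; apply: m21_21].
have E4 : Q d x = d ⋆ x.
  apply: QP21; last by apply: m22_21.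
  by rewrite /Defs.lie (m21_22 hx hd) subr0.
rewrite E1 E2 E4 (D0 Hb HD).
have -> : - (x ⋆ a) + 0 + Q c x + d ⋆ x = Q c x + (- (x ⋆ a) + d ⋆ x) by zmod.
rewrite (L2 hc'); last by apply: P21D; [apply: P21N; apply: m21_11 | apply: m22_21].
rewrite (F5 ha hx hd); zmod.
Qed.
End Main.


Lemma lie2to3 (R : zmodType) (mul : R -> R -> R) (D : R -> R) :
  biadditive mul -> lie_n_derivation mul 2 D -> lie_n_derivation mul 3 D.
Proof.
move=> Hb H2 xs.
have E1 := H2 xs.
have E2 := H2 (fun j => if j == 0%N then lie mul (xs 0%N) (xs 1%N) else xs 2%N).
rewrite !big_ord_recl !big_ord0 /= in E1 E2 *.
rewrite E2 E1 addr0 (lieDl Hb); zmod.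
Qed.

Unset Implicit Arguments.
Theorem lemma2p6 (R : zmodType) (mul : R -> R -> R) (e1 : R) (D : R -> R) :
  biadditive mul ->
  alternative mul ->
  nontrivial_idempotent mul e1 ->
  (forall a11 a22, peirce mul e1 1 1 a11 -> peirce mul e1 2 2 a22 ->
     (forall x, peirce mul e1 1 2 x -> lie mul (a11 + a22) x = 0) ->
     central mul (a11 + a22)) ->
  (forall a11 a22, peirce mul e1 1 1 a11 -> peirce mul e1 2 2 a22 ->
     (forall x, peirce mul e1 2 1 x -> lie mul (a11 + a22) x = 0) ->
     central mul (a11 + a22)) ->
  lie_type_derivation mul D ->
  forall a11 b12 c21 d22,
    peirce mul e1 1 1 a11 -> peirce mul e1 1 2 b12 ->
    peirce mul e1 2 1 c21 -> peirce mul e1 2 2 d22 ->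
    exists z, central mul z /\
      D (a11 + b12 + c21 + d22) = D a11 + D b12 + D c21 + D d22 + z.
Proof.
move=> Hb Ha [_ [He _]] Hi Hii [n [hn HD]] a b c d ha hb hc hd.
have [k [Hk HDk]] : exists k, (0 < k)%N /\ lie_n_derivation mul k.+2 D.
  case: n hn HD => [|[|[|n]]] // _ HD.
    by exists 1%N; split => //; apply: lie2to3.
  by exists n.+1.
exists (D (a + b + c + d) - D a - D b - D c - D d); split.
  apply: (mainT Hb Ha He HDk Hk Hi Hii).
  - exact: (pe11 Hb Ha He).
  - exact: (pe12 Hb Ha He).
  - exact: (pe21 Hb Ha He).
  - exact: (pe22 Hb Ha He).
zmod.
Qed.
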